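(* Let $n$ be a prime, let $\alpha$ be a primitive element of $\mathbb{F}_{2^n}$, identify $\mathbb{F}_2^n$ with $\mathbb{F}_{2^n}$ as $\mathbb{F}_2$-vector spaces, and let $k\ge 2$. If there exist $\frac{2^n-2}{(2^k-1)(2^k-2)n}$ pairwise disjoint coset complete $k$-dimensional subspaces of $\mathbb{F}_2^n$, then there exists a Steiner structure $\mathbb{S}_2[2,k,n]$.
   Context: For $s\in\mathbb{Z}_{2^n-1}$, the cyclotomic coset of $s$ is $C_s=\{s\cdot 2^i \bmod (2^n-1): 0\le i\le n-1\}$, and $\rho(s)$ denotes the smallest element of $C_s$ (its coset representative). For a $k$-dimensional subspace $X=\{0,\alpha^{i_1},\dots,\alpha^{i_{2^k-1}}\}$ of $\mathbb{F}_2^n$ (exponents in $\mathbb{Z}_{2^n-1}$), its coset difference set is $\rho(\Delta(X))=\{\rho(i_r-i_s): 1\le r,s\le 2^k-1,\ r\ne s\}$. $X$ is coset complete if $|\rho(\Delta(X))|=(2^k-1)(2^k-2)$; two coset complete subspaces $X,Y$ are disjoint coset complete if $\rho(\Delta(X))\cap\rho(\Delta(Y))=\varnothing$. A Steiner structure $\mathbb{S}_2[2,k,n]$ is a set of $k$-dimensional subspaces of $\mathbb{F}_2^n$ such that each $2$-dimensional subspace of $\mathbb{F}_2^n$ is contained in exactly one of them. *)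

(* Defs.v *)
From HB Require Import structures.
From mathcomp Require Import all_boot all_order all_algebra.
Set Implicit Arguments. Unset Strict Implicit. Unset Printing Implicit Defensive.
Import GRing.Theory.
Local Open Scope ring_scope.

(* Cyclotomic coset representative rho(s) in Z_N (N = 2^n - 1):
   smallest element of { s * 2^i mod N : 0 <= i <= n-1 }. *)
Definition rho (N n s : nat) : nat :=
  \big[minn/ (s %% N)%N]_(i < n) ((s * 2 ^ i) %% N)%N.

(* Discrete logarithm to base a of x, as an element of {0, ..., N-1}
   (for a primitive N-th root a and x <> 0, the unique i < N with a^i = x). *)
Definition dlog (L : fieldType) (N : nat) (a x : L) : nat :=
  find (fun i => a ^+ i == x) (iota 0 N).

Section CosetDiff.
Variables (n : nat) (L : finFieldType) (phi : 'rV['F_2]_n -> L) (alpha : L).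

Definition NN : nat := (2 ^ n).-1.

Definition nzpts (X : {vspace 'rV['F_2]_n}) : seq L :=
  [seq phi v | v <- enum [set: 'rV['F_2]_n] & (v \in X) && (v != 0)].

Definition coset_diff (X : {vspace 'rV['F_2]_n}) : seq nat :=
  undup [seq rho NN n ((dlog NN alpha p.1 + NN - dlog NN alpha p.2) %% NN)%N
        | p <- [seq (x, y) | x <- nzpts X, y <- nzpts X] & p.1 != p.2].

Definition coset_complete (k : nat) (X : {vspace 'rV['F_2]_n}) : bool :=
  (\dim X == k) && (size (coset_diff X) == ((2 ^ k).-1 * (2 ^ k - 2))%N).

Definition disjoint_coset (X Y : {vspace 'rV['F_2]_n}) : bool :=
  ~~ has (fun d => d \in coset_diff Y) (coset_diff X).

End CosetDiff.

Definition steiner_structure (k n : nat) (S : seq {vspace 'rV['F_2]_n}) : Prop :=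
  uniq S /\ (forall V, V \in S -> \dim V = k) /\
  (forall U : {vspace 'rV['F_2]_n}, \dim U = 2%N ->
     count (fun V => (U <= V)%VS) S = 1%N).
Arguments steiner_structure : clear implicits.

(* Main.v *)
Require Import Defs.
From HB Require Import structures.
From mathcomp Require Import all_boot all_order all_algebra all_field zify.
Import GRing.Theory.
Local Open Scope ring_scope.
Set Implicit Arguments. Unset Strict Implicit. Unset Printing Implicit Defensive.

Lemma exp2_mod (n i : nat) : (0 < n)%N ->
  (2 ^ i %% (2 ^ n).-1 = 2 ^ (i %% n) %% (2 ^ n).-1)%N.
Proof.
move=> n0; set N := (2 ^ n).-1.
have e1 : (2 ^ n = 1 %[mod N])%N.
  have -> : (2 ^ n = N + 1)%N by rewrite /N addn1 prednK // expn_gt0.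
  by rewrite -modnDml modnn.
rewrite {1}(divn_eq i n) expnD [(_ %/ n * n)%N]mulnC expnM -modnMml -modnXm e1 modnXm exp1n.
by rewrite modnMml mul1n.
Qed.

Lemma bigmin_le (I : eqType) (r : seq I) x0 (F : I -> nat) t :
  t \in r -> (\big[minn/x0]_(i <- r) F i <= F t)%N.
Proof.
elim: r => // a r IH; rewrite inE big_cons => /predU1P [->|/IH H].
  exact: geq_minl.
exact: leq_trans (geq_minr _ _) H.
Qed.

Lemma rho_le N n s i : (0 < n)%N -> N = (2 ^ n).-1 ->
  (rho N n s <= (s * 2 ^ i) %% N)%N.
Proof.
move=> n0 ->; rewrite /rho.
have := bigmin_le (s %% (2^n).-1)%N (fun i0 : 'I_n => (s * 2 ^ i0) %% (2 ^ n).-1)%N (mem_index_enum (Ordinal (ltn_pmod i n0))).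
move/leq_trans; apply.
by rewrite /= -modnMmr -exp2_mod // modnMmr.
Qed.

Lemma rho_att N n s : exists i, rho N n s = ((s * 2 ^ i) %% N)%N.
Proof.
rewrite /rho; apply: (big_ind (fun y => exists i, y = (s * 2 ^ i) %% N)%N).
- by exists 0%N; rewrite expn0 muln1.
- move=> x y [i ->] [j ->]; rewrite /minn; case: ifP=> _; by [exists i | exists j].
- by move=> i _; exists i.
Qed.

Lemma rho_mod N n s : rho N n (s %% N) = rho N n s.
Proof.
rewrite /rho modn_mod; apply: eq_bigr => i _; by rewrite modnMml.
Qed.

Lemma rho_leq2 N n s s' l : (0 < n)%N -> N = (2 ^ n).-1 ->
  (s' = s * 2 ^ l %[mod N])%N -> (rho N n s <= rho N n s')%N.
Proof.
move=> n0 eN e; have [i ->] := rho_att N n s'.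
by rewrite -modnMml e modnMml -mulnA -expnD; apply: rho_le.
Qed.

Lemma rho_eq2 N n s s' l : (0 < n)%N -> N = (2 ^ n).-1 ->
  (s' = s * 2 ^ l %[mod N])%N -> rho N n s' = rho N n s.
Proof.
move=> n0 eN e; apply/eqP; rewrite eqn_leq (rho_leq2 n0 eN e) andbT.
have H := rho_leq2 (l := (l * n.-1)%N) (s := s') (s' := s) n0 eN; apply: H.
rewrite -[RHS]modnMml e modnMml -mulnA -expnD.
have -> : (l + l * n.-1 = n * l)%N by case: n n0 {eN e} => // n1 _ /=; lia.
rewrite -modnMmr expnM -modnXm.
have -> : (2 ^ n %% N = 1 %% N)%N.
  by rewrite eN exp2_mod // modnn.
by rewrite modnXm exp1n modnMmr muln1.
Qed.

Definition offd (T : finType) (A : {set T}) : {set T * T} :=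
  [set p | (p.1 \in A) && (p.2 \in A) && (p.1 != p.2)].

Lemma card_offd (T : finType) (A : {set T}) : #|offd A| = (#|A| * #|A|.-1)%N.
Proof.
have -> : offd A = setX A A :\: [set (x, x) | x in A].
  apply/setP=> [[x y]]; rewrite !inE /=.
  apply/idP/idP.
    case/andP=> /andP[xA yA] xy; rewrite xA yA !andbT.
    apply/negP=> /imsetP[z _ E]; case: E xy => -> -> /eqP; by [].
  case/and3P=> H xA yA; rewrite xA yA andTb; apply: contra H => /eqP ->.
  by apply/imsetP; exists y.
rewrite cardsD cardsX.
have -> : setX A A :&: [set (x, x) | x in A] = [set (x, x) | x in A].
  apply/setIidPr/subsetP=> p /imsetP[x xA ->]; by rewrite inE /= xA.
rewrite card_imset; last by move=> x y [].
by rewrite -subn1 mulnBr muln1.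
Qed.


Section Fld.
Variables (n : nat) (L : finFieldType) (alpha : L).
Hypothesis cardL : #|L| = (2 ^ n)%N.
Hypothesis prim : (NN n).-primitive_root alpha.
Hypothesis char2 : forall z : L, z + z = 0.

Local Notation N := (NN n).

Lemma N_gt0 : (0 < N)%N. Proof. exact: prim_order_gt0 prim. Qed.
Lemma n_gt0 : (0 < n)%N.
Proof. have := N_gt0; rewrite /NN; case: n => //. Qed.
Lemma cardLN : #|L| = N.+1.
Proof. by rewrite cardL /NN prednK // expn_gt0. Qed.

Lemma alpha_neq0 : alpha != 0.
Proof.
apply/eqP=> a0; have := prim_expr_order prim; rewrite a0 expr0n.
by rewrite eqn0Ngt N_gt0 /= => /eqP; rewrite eq_sym oner_eq0.
Qed.

Lemma expN1 (z : L) : z != 0 -> z ^+ N = 1.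
Proof.
move=> z0; have := expf_card z; rewrite cardLN exprSr => e.
by apply: (mulIf z0); rewrite mul1r.
Qed.

Lemma alpha_surj (z : L) : z != 0 -> exists2 i, (i < N)%N & alpha ^+ i = z.
Proof.
move=> z0.
pose A := [set alpha ^+ (val i) | i : 'I_N].
have cA : #|A| = N.
  rewrite card_imset ?card_ord // => i j /eqP; rewrite (eq_prim_root_expr prim).
  by rewrite !modn_small ?ltn_ord // => /eqP /val_inj.
have sA : A \subset [set~ 0].
  apply/subsetP=> x /imsetP[i _ ->]; by rewrite !inE expf_neq0 // alpha_neq0.
have eA : A = [set~ 0].
  by apply/eqP; rewrite eqEcard sA cA cardsC1 cardLN /=.
have : z \in A by rewrite eA !inE.
by case/imsetP=> i _ ->; exists (val i); rewrite ?ltn_ord.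
Qed.

Lemma dlogP (z : L) : z != 0 -> (dlog N alpha z < N)%N /\ alpha ^+ dlog N alpha z = z.
Proof.
move=> z0; have [i iN ei] := alpha_surj z0.
have hs : has (fun i => alpha ^+ i == z) (iota 0 N).
  by apply/hasP; exists i; rewrite ?mem_iota ?ei //.
split; first by move: hs; rewrite has_find size_iota.
have := nth_find 0%N hs; rewrite /dlog nth_iota ?add0n; first by move/eqP.
by move: hs; rewrite has_find size_iota.
Qed.

Definition Dif (x y : L) : nat := ((dlog N alpha x + N - dlog N alpha y) %% N)%N.

Lemma DifP (x y : L) : x != 0 -> y != 0 -> alpha ^+ Dif x y = x / y.
Proof.
move=> x0 y0; have [xN ex] := dlogP x0; have [yN ey] := dlogP y0.
rewrite /Dif expr_mod ?(prim_expr_order prim) // -addnBA ?(ltnW yN) // exprD ex.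
congr (_ * _); apply: (mulIf y0); rewrite mulVf // -{2}ey -exprD subnK ?(ltnW yN) //.
by rewrite (prim_expr_order prim).
Qed.

Lemma frobD l (x y : L) : (x + y) ^+ (2 ^ l) = x ^+ (2 ^ l) + y ^+ (2 ^ l).
Proof.
elim: l => [|l IH]; first by rewrite !expr1.
rewrite expnS mulnC !exprM IH sqrrD.
by rewrite mulr2n char2 addr0.
Qed.

Lemma oppc (z : L) : - z = z.
Proof. by apply/eqP; rewrite -subr_eq0 -opprD char2 oppr0. Qed.

Lemma frob_inj l (x y : L) : x ^+ (2 ^ l) = y ^+ (2 ^ l) -> x = y.
Proof.
move=> e; apply/eqP; rewrite -subr_eq0.
have : (x - y) ^+ (2 ^ l) == 0 by rewrite oppc frobD e char2.
by rewrite expf_eq0 expn_gt0.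
Qed.

Definition G (j l : nat) (x : L) := alpha ^+ j * x ^+ (2 ^ l).

Lemma G_inj j l : injective (G j l).
Proof.
move=> x y; rewrite /G => /(mulfI (expf_neq0 j alpha_neq0)); exact: frob_inj.
Qed.
Lemma G_add j l (x y : L) : G j l (x + y) = G j l x + G j l y.
Proof. by rewrite /G frobD mulrDr. Qed.
Lemma G0 j l : G j l 0 = 0.
Proof. by rewrite /G expr0n expn_eq0 /= mulr0. Qed.
Lemma G_neq0 j l (x : L) : x != 0 -> G j l x != 0.
Proof. by move=> x0; rewrite /G mulf_neq0 ?expf_neq0 ?alpha_neq0. Qed.

Lemma iter_frob (w : L) e c : w ^+ (2 ^ e) = w -> w ^+ (2 ^ (e * c)) = w.
Proof.
move=> we; elim: c => [|c IH]; first by rewrite muln0 expr1.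
by rewrite mulnS expnD exprM we IH.
Qed.

Lemma frob_fix (w : L) e : prime n -> (0 < e < n)%N -> w != 0 ->
  w ^+ (2 ^ e) = w -> w = 1.
Proof.
move=> pn /andP[e0 en] w0 we.
have wn : w ^+ (2 ^ n) = w by rewrite -cardL expf_card.
have [a _ ha] := Bezoutl n e0.
have cop : gcdn e n = 1%N.
  apply/eqP; rewrite -/(coprime e n) coprime_sym prime_coprime //.
  by apply/negP=> /(dvdn_leq e0); rewrite leqNgt en.
rewrite cop in ha; case/dvdnP: ha => c hc.
have h1 := iter_frob c we.
have w2 : (w ^+ 2) ^+ (2 ^ n) = w ^+ 2 by rewrite -cardL expf_card.
have h3 := iter_frob a w2.
have e1 : (e * c = 1 + n * a)%N by rewrite mulnC -hc mulnC.
rewrite e1 expnD expn1 exprM h3 in h1.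
have : w * w = w * 1 by rewrite mulr1 -expr2 h1.
by move/(mulfI w0).
Qed.

Lemma Gdiv j l (x y : L) : y != 0 -> G j l x / G j l y = (x / y) ^+ (2 ^ l).
Proof.
move=> y0; rewrite /G invfM mulrACA divff ?expf_neq0 ?alpha_neq0 // mul1r.
by rewrite exprMn exprVn.
Qed.

Lemma alg_uniq (a b : L) j j' l l' : prime n -> a != 0 -> b != 0 -> a != b ->
  (j < N)%N -> (j' < N)%N -> (l < n)%N -> (l' < n)%N ->
  G j l a = G j' l' a -> G j l b = G j' l' b -> j = j' /\ l = l'.
Proof.
move=> pn a0 b0 ab.
have Hl : forall j j' l l', (l < l')%N -> (l' < n)%N ->
    G j l a = G j' l' a -> G j l b = G j' l' b -> False.
  move=> j1 j2 l1 l2 ll ln e1 e2.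
  have ed : (a / b) ^+ (2 ^ l1) = (a / b) ^+ (2 ^ l2) by rewrite -(Gdiv j1) // -(Gdiv j2) // e1 e2.
  have w0 : (a / b) ^+ (2 ^ l1) != 0 by rewrite expf_neq0 // mulf_neq0 ?invr_eq0.
  have : (a / b) ^+ (2 ^ l1) = 1.
    apply: (@frob_fix _ (l2 - l1)) => //; first by rewrite subn_gt0 ll /=; apply: leq_ltn_trans (leq_subr _ _) ln.
    by rewrite -exprM -expnD subnKC ?(ltnW ll) // ed.
  rewrite -(expr1n _ (2 ^ l1)) => /frob_inj /eqP.
  by rewrite (can2_eq (divfK b0) (mulfK b0)) mul1r (negbTE ab).
move=> jN j'N lN l'N e1 e2.
have ll : l = l'.
  case: (ltngtP l l') => // H; first by case: (Hl _ _ _ _ H l'N e1 e2).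
  by case: (Hl _ _ _ _ H lN (esym e1) (esym e2)).
subst l'; split=> //.
move: e1; rewrite /G => /(mulIf (expf_neq0 _ a0)) /eqP.
by rewrite (eq_prim_root_expr prim) !modn_small // => /eqP.
Qed.

End Fld.


Lemma F2_2 : (2%:R : 'F_2) = 0.
Proof. by apply/eqP; rewrite -(dvdn_pcharf (pchar_Fp (isT : prime 2))). Qed.
Lemma rV2 n (v : 'rV['F_2]_n) : v + v = 0.
Proof. by rewrite -mulr2n -scaler_nat F2_2 scale0r. Qed.
Lemma F2_cases (c : 'F_2) : c = 0 \/ c = 1.
Proof. case: c => [[|[|c]]] Hc //=; [left|right]; exact: val_inj. Qed.

Lemma uniq_map_inj (T U : eqType) (f : T -> U) (s : seq T) x y :
  uniq (map f s) -> x \in s -> y \in s -> f x = f y -> x = y.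
Proof.
elim: s => //= z s IH /andP[fz Us]; rewrite !inE => /predU1P[->|xs] /predU1P[->|ys] e //.
- by move: fz; rewrite e map_f.
- by move: fz; rewrite -e map_f.
- exact: IH.
Qed.

Lemma size_offpairs (T : finType) (s : seq T) : uniq s ->
  size [seq p <- [seq (x, y) | x <- s, y <- s] | p.1 != p.2] = (size s * (size s).-1)%N.
Proof.
move=> Us; set t := [seq p <- _ | _].
have Ut : uniq t.
  apply: filter_uniq; apply: allpairs_uniq => // [[a b]] [c d] _ _ /=; by case=> -> ->.
rewrite -(card_uniqP Ut).
have -> : #|t| = #|offd [set x in s]|.
  apply: eq_card => [[a b]]; rewrite /t mem_filter !inE /=.
  apply/andP/idP=> [[ab /allpairsP[[c d] [/= c1 d1 E]]] | /andP[/andP[a1 b1] ab]].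
    by case: E ab => -> -> ab; rewrite c1 d1 ab.
  by split=> //; apply/allpairsP; exists (a, b).
by rewrite card_offd cardsE (card_uniqP Us).
Qed.

Section Vsp.
Variables (n : nat) (L : finFieldType) (phi : 'rV['F_2]_n -> L) (alpha : L).
Hypothesis phiD : {morph phi : x y / x + y}.
Hypothesis phiB : bijective phi.

Lemma phi_inj : injective phi. Proof. exact: bij_inj. Qed.
Lemma phi0 : phi 0 = 0.
Proof. by apply: (addrI (phi 0)); rewrite -phiD !addr0. Qed.
Lemma phi_neq0 v : v != 0 -> phi v != 0.
Proof. by apply: contra => /eqP; rewrite -phi0 => /phi_inj ->. Qed.
Lemma char2L (z : L) : z + z = 0.
Proof. case: phiB => psi _ K; by rewrite -(K z) -phiD rV2 phi0. Qed.

Lemma mem_nzpts (X : {vspace 'rV['F_2]_n}) v : v \in X -> v != 0 -> phi v \in nzpts phi X.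
Proof.
move=> vX v0; apply: map_f; by rewrite mem_filter vX v0 mem_enum inE.
Qed.

Lemma uniq_nzpts (X : {vspace 'rV['F_2]_n}) : uniq (nzpts phi X).
Proof.
rewrite /nzpts map_inj_uniq; last exact: phi_inj.
by apply: filter_uniq; apply: enum_uniq.
Qed.

Lemma size_nzpts (X : {vspace 'rV['F_2]_n}) : size (nzpts phi X) = (2 ^ \dim X).-1.
Proof.
rewrite /nzpts size_map -(card_uniqP (filter_uniq _ (enum_uniq _))).
have -> : #|[seq v <- enum [set: 'rV['F_2]_n] | (v \in X) && (v != 0)]| = #|[set v | v \in X] :\ 0|.
  by apply: eq_card => v; rewrite mem_filter !inE mem_enum inE andbT andbC.
have := cardsD1 0 [set v in X]; rewrite inE mem0v cardsE card_vspace card_Fp //.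
by rewrite add1n => ->.
Qed.
End Vsp.


Section Core.
Variables (n k m : nat) (L : finFieldType) (phi : 'rV['F_2]_n -> L) (alpha : L).
Hypothesis phiD : {morph phi : x y / x + y}.
Hypothesis phiB : bijective phi.
Hypothesis cardL : #|L| = (2 ^ n)%N.
Hypothesis prim : (NN n).-primitive_root alpha.
Hypothesis pn : prime n.
Variable F : 'I_m -> {vspace 'rV['F_2]_n}.
Hypothesis ccF : forall i, coset_complete phi alpha k (F i).
Hypothesis disjF : forall i j, i != j -> disjoint_coset phi alpha (F i) (F j).

Local Notation N := (NN n).
Let char2 := char2L phiD phiB.

Definition pl (X : {vspace 'rV['F_2]_n}) :=
  [seq p <- [seq (x, y) | x <- nzpts phi X, y <- nzpts phi X] | p.1 != p.2].
Definition fv (p : L * L) := rho N n (Dif n alpha p.1 p.2).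

Lemma cdE (X : {vspace 'rV['F_2]_n}) : coset_diff phi alpha X = undup (map fv (pl X)).
Proof. by []. Qed.

Lemma cc_uniq (X : {vspace 'rV['F_2]_n}) : coset_complete phi alpha k X -> uniq (map fv (pl X)).
Proof.
case/andP=> /eqP dX /eqP sz; move: sz; rewrite cdE => sz.
apply/negPn; rewrite -ltn_size_undup sz size_map /pl size_offpairs ?uniq_nzpts //.
rewrite size_nzpts // dX; apply/negP.
have -> : ((2 ^ k).-1.-1 = 2 ^ k - 2)%N by rewrite -!subn1 -subnDA.
by rewrite ltnn.
Qed.

Lemma in_pl (X : {vspace 'rV['F_2]_n}) u w : u \in X -> w \in X -> u != 0 -> w != 0 -> u != w ->
  (phi u, phi w) \in pl X.
Proof.
move=> uX wX u0 w0 uw; rewrite /pl mem_filter /=.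
rewrite (inj_eq (phi_inj phiB)) uw /=.
by apply/allpairsP; exists (phi u, phi w); rewrite /= !mem_nzpts.
Qed.

Lemma Dif_G j l (a b : L) : a != 0 -> b != 0 ->
  (Dif n alpha (G alpha j l a) (G alpha j l b) = Dif n alpha a b * 2 ^ l %[mod N])%N.
Proof.
move=> a0 b0; apply/eqP; rewrite -(eq_prim_root_expr prim).
have Ga0 := G_neq0 prim j l a0.
have Gb0 := G_neq0 prim j l b0.
by rewrite (DifP cardL prim Ga0 Gb0) (Gdiv prim j l a b0) exprM (DifP cardL prim a0 b0).
Qed.

Lemma core_uniq i i' (u w u' w' : 'rV['F_2]_n) j j' l l' :
  u \in F i -> w \in F i -> u != 0 -> w != 0 -> u != w ->
  u' \in F i' -> w' \in F i' -> u' != 0 -> w' != 0 -> u' != w' ->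
  (j < N)%N -> (j' < N)%N -> (l < n)%N -> (l' < n)%N ->
  G alpha j l (phi u) = G alpha j' l' (phi u') ->
  G alpha j l (phi w) = G alpha j' l' (phi w') ->
  [/\ i = i', j = j' & l = l'].
Proof.
move=> uF wF u0 w0 uw uF' wF' u0' w0' uw' jN jN' lN lN' e1 e2.
have n0 : (0 < n)%N by apply: prime_gt0.
have a0 := phi_neq0 phiD phiB u0; have b0 := phi_neq0 phiD phiB w0.
have a0' := phi_neq0 phiD phiB u0'; have b0' := phi_neq0 phiD phiB w0'.
have ev : fv (phi u, phi w) = fv (phi u', phi w').
  rewrite /fv /= -(rho_eq2 n0 (erefl _) (Dif_G j l a0 b0)).
  rewrite -(rho_eq2 n0 (erefl _) (Dif_G j' l' a0' b0')).
  by rewrite e1 e2.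
have p1 := in_pl uF wF u0 w0 uw; have p2 := in_pl uF' wF' u0' w0' uw'.
have ii : i = i'.
  case: (eqVneq i i') => // ne; have := disjF ne; rewrite /disjoint_coset.
  case/hasP; exists (fv (phi u, phi w)); rewrite cdE mem_undup; first exact: map_f.
  by rewrite ev; apply: map_f.
subst i'.
have [] := uniq_map_inj (cc_uniq (ccF i)) p1 p2 ev.
move=> /(phi_inj phiB) eu /(phi_inj phiB) ew; subst u' w'.
have ab : phi u != phi w by rewrite (inj_eq (phi_inj phiB)).
have [-> ->] := alg_uniq cardL prim char2 pn a0 b0 ab jN jN' lN lN' e1 e2.
by [].
Qed.
End Core.


Lemma span_img n (h : 'rV['F_2]_n -> 'rV['F_2]_n) (X : {vspace 'rV['F_2]_n}) :
  {morph h : x y / x + y} -> forall x,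
  reflect (exists2 u, u \in X & x = h u) (x \in <<map h (vbasis X)>>%VS).
Proof.
move=> hD x.
have h0 : h 0 = 0 by apply: (addrI (h 0)); rewrite -hD !addr0.
have hZ c v : h (c *: v) = c *: h v.
  by case: (F2_cases c) => ->; rewrite ?scale0r ?scale1r.
have hsum := big_morph h hD h0.
apply: (iffP idP).
  move=> xs.
  have := coord_span (X := map_tuple h (vbasis X)) xs.
  move=> ex.
  exists (\sum_i coord (map_tuple h (vbasis X)) i x *: (vbasis X)`_i).
    by apply: memv_suml => i _; apply: memvZ; apply: vbasis_mem; apply: mem_nth; rewrite size_tuple.
  rewrite {1}ex hsum; apply: eq_bigr => i _; rewrite hZ /=.
  by rewrite (nth_map 0) // size_tuple.
case=> u uX ->; rewrite (coord_vbasis uX) hsum.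
apply: memv_suml => i _; rewrite hZ; apply: memvZ; apply: memv_span.
by apply: map_f; apply: mem_nth; rewrite size_tuple.
Qed.

Lemma card_vsp n (X : {vspace 'rV['F_2]_n}) : #|[set v in X]| = (2 ^ \dim X)%N.
Proof. by rewrite cardsE card_vspace card_Fp. Qed.

Lemma dim_img n (h : 'rV['F_2]_n -> 'rV['F_2]_n) (X : {vspace 'rV['F_2]_n}) :
  {morph h : x y / x + y} -> injective h ->
  \dim <<map h (vbasis X)>>%VS = \dim X.
Proof.
move=> hD hI; apply/eqP; rewrite -(@eqn_exp2l 2) // -!card_vsp.
have -> : [set v in <<map h (vbasis X)>>%VS] = h @: [set v in X].
  apply/setP=> v; rewrite inE; apply/(span_img _ hD)/imsetP=> [[u uX ->]|[u]].
    by exists u; rewrite ?inE.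
  by rewrite inE => uX ->; exists u.
by rewrite card_imset.
Qed.

Lemma dim2 n (U : {vspace 'rV['F_2]_n}) : \dim U = 2%N ->
  exists x y, [/\ x != 0, y != 0, x != y &
    forall V : {vspace 'rV['F_2]_n}, (U <= V)%VS = (x \in V) && (y \in V)].
Proof.
move=> dU; have sz : size (tval (vbasis U)) = 2%N by rewrite size_tuple.
have fr := basis_free (vbasisP U); have sp := span_basis (vbasisP U).
move: fr sp sz; case: (tval (vbasis U)) => [|x [|y [|]]] //= fr sp _.
exists x, y; split.
- by apply: (free_not0 fr); rewrite inE eqxx.
- by apply: (free_not0 fr); rewrite !inE eqxx orbT.
- by have := free_uniq fr; rewrite /= inE andbT.
move=> V; rewrite -sp; apply/span_subvP/andP=> [H|[xV yV] z].
  by split; apply: H; rewrite !inE eqxx ?orbT.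
by rewrite !inE => /orP[] /eqP ->.
Qed.


Section Count.
Variables (n k m : nat) (L : finFieldType) (phi : 'rV['F_2]_n -> L) (alpha : L).
Hypothesis phiD : {morph phi : x y / x + y}.
Hypothesis phiB : bijective phi.
Hypothesis cardL : #|L| = (2 ^ n)%N.
Hypothesis prim : (NN n).-primitive_root alpha.
Hypothesis pn : prime n.
Variable F : 'I_m -> {vspace 'rV['F_2]_n}.
Hypothesis ccF : forall i, coset_complete phi alpha k (F i).
Hypothesis disjF : forall i j, i != j -> disjoint_coset phi alpha (F i) (F j).
Hypothesis hm : (m * ((2 ^ k).-1 * (2 ^ k - 2) * n))%N = ((2 ^ n) - 2)%N.

Local Notation N := (NN n).
Let char2 := char2L phiD phiB.

Definition Aset i := [set v | (v \in F i) && (v != 0)].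
Definition Cset (t : 'I_m * 'I_N * 'I_n) : {set L * L} :=
  [set (G alpha t.1.2 t.2 (phi p.1), G alpha t.1.2 t.2 (phi p.2)) | p in offd (Aset t.1.1)].
Definition Tot := offd [set z : L | z != 0].

Lemma card_Aset i : #|Aset i| = (2 ^ k).-1.
Proof.
have := cardsD1 0 [set v in F i]; rewrite inE mem0v card_vsp.
have /andP[/eqP -> _] := ccF i.
rewrite add1n => ->; apply: eq_card => v; by rewrite !inE andbC.
Qed.

Lemma card_Cset t : #|Cset t| = ((2 ^ k).-1 * (2 ^ k).-1.-1)%N.
Proof.
rewrite /Cset card_imset ?card_offd ?card_Aset //.
move=> [a b] [c d] [] e1 e2.
have pI := phi_inj phiB.
by rewrite (pI _ _ (G_inj prim char2 e1)) (pI _ _ (G_inj prim char2 e2)).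
Qed.

Lemma Cset_sub t : Cset t \subset Tot.
Proof.
apply/subsetP=> q /imsetP[[a b]]; rewrite !inE /= => /andP[/andP[/andP[_ a0] /andP[_ b0]] ab] ->.
rewrite !(G_neq0 prim) ?(phi_neq0 phiD phiB) //=.
by rewrite (inj_eq (@G_inj _ _ _ prim char2 _ _)) (inj_eq (phi_inj phiB)).
Qed.

Lemma Cset_disj t t' : t != t' -> [disjoint Cset t & Cset t'].
Proof.
move=> ne; apply/pred0P=> q /=; apply/negP=> /andP[].
case: t ne => [[i j] l]; case: t' => [[i' j'] l'] ne.
move=> /imsetP[[a b]]; rewrite !inE /= => /andP[/andP[/andP[aF a0] /andP[bF b0]] ab] ->.
move=> /imsetP[[a' b']]; rewrite !inE /= => /andP[/andP[/andP[aF' a0'] /andP[bF' b0']] ab'] [e1 e2].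
have [ei ej el] := core_uniq phiD phiB cardL prim pn ccF disjF aF bF a0 b0 ab aF' bF' a0' b0' ab'
  (ltn_ord j) (ltn_ord j') (ltn_ord l) (ltn_ord l') e1 e2.
move: ne; rewrite ei; have -> : j = j' by apply: val_inj.
have -> : l = l' by apply: val_inj.
by rewrite eqxx.
Qed.

Lemma cover_all q : q \in Tot -> exists t, q \in Cset t.
Proof.
move=> qT.
have eq : \bigcup_t Cset t = Tot.
  apply/eqP; rewrite eqEcard; apply/andP; split.
    by apply/bigcupsP=> t _; apply: Cset_sub.
  have := @partition_disjoint_bigcup _ _ _ 0%N addn Cset (fun _ => 1%N) Cset_disj.
  rewrite !sum1_card => ->.
  under eq_bigr do rewrite sum1_card card_Cset.
  rewrite sum_nat_const card_prod !card_ord /Tot card_offd.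
  have -> : #|[set z : L | z != 0]| = N.
    by rewrite -[N]/(N.+1.-1) -(cardLN cardL) -(cardsC1 0); apply: eq_card => z; rewrite !inE.
  have -> : (N.-1 = 2 ^ n - 2)%N by rewrite /NN -!subn1 -subnDA.
  have -> : ((2 ^ k).-1.-1 = 2 ^ k - 2)%N by rewrite -!subn1 -subnDA.
  rewrite -hm card_prod !card_ord; apply: eq_leq; lia.
by move: qT; rewrite -eq => /bigcupP[t _ qt]; exists t.
Qed.
End Count.


Theorem theorem2 (n k : nat) (L : finFieldType) (alpha : L)
    (phi : 'rV['F_2]_n -> L) :
  prime n ->
  #|L| = (2 ^ n)%N ->
  (NN n).-primitive_root alpha ->
  {morph phi : x y / x + y} -> bijective phi ->
  (2 <= k)%N ->
  forall m : nat,
  (m * ((2 ^ k).-1 * (2 ^ k - 2) * n))%N = ((2 ^ n) - 2)%N ->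
  (exists F : 'I_m -> {vspace 'rV['F_2]_n},
      (forall i, coset_complete phi alpha k (F i)) /\
      (forall i j, i != j -> disjoint_coset phi alpha (F i) (F j))) ->
  exists S : seq {vspace 'rV['F_2]_n}, steiner_structure k n S.
Proof.
move=> pn cardL prim phiD phiB k2 m hm [F [ccF disjF]].
have char2 := char2L phiD phiB.
have phiB' := phiB; case: phiB' => psi K1 K2.
have psiD : {morph psi : x y / x + y}.
  by move=> x y; apply: (phi_inj phiB); rewrite phiD !K2.
pose h (t : 'I_m * 'I_(NN n) * 'I_n) v := psi (G alpha t.1.2 t.2 (phi v)).
have hD t : {morph h t : x y / x + y}.
  by move=> x y; rewrite /h phiD (G_add _ char2) psiD.
have hI t : injective (h t).
  move=> x y; rewrite /h => /(can_inj K2) /(G_inj prim char2); exact: (phi_inj phiB).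
pose V t := <<map (h t) (vbasis (F t.1.1))>>%VS.
have memV t x : reflect (exists2 u, u \in F t.1.1 & x = h t u) (x \in V t).
  exact: span_img (hD t) x.
exists (undup [seq V t | t <- enum [set: 'I_m * 'I_(NN n) * 'I_n]]).
split; first exact: undup_uniq.
split.
  move=> W; rewrite mem_undup => /mapP[t _ ->].
  by rewrite /V dim_img //; have /andP[/eqP] := ccF t.1.1.
move=> U dU.
have [x [y [x0 y0 xy sU]]] := dim2 dU.
have qT : (phi x, phi y) \in Tot L.
  by rewrite !inE /= !(phi_neq0 phiD phiB) // (inj_eq (phi_inj phiB)).
have [t0 /imsetP[[u w]]] := cover_all phiD phiB cardL prim pn ccF disjF hm qT.
rewrite !inE /= => /andP[/andP[/andP[uF u0] /andP[wF w0]] uw] [ex ey].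
have xV : x \in V t0 by apply/memV; exists u => //; rewrite /h -ex K1.
have yV : y \in V t0 by apply/memV; exists w => //; rewrite /h -ey K1.
have uniqt t : (U <= V t)%VS -> t = t0.
  rewrite sU => /andP[/memV[u' u'F ex'] /memV[w' w'F ey']].
  have u0' : u' != 0.
    apply: contra x0 => /eqP e; rewrite ex' e /h (phi0 phiD) G0.
    by apply/eqP; apply: (phi_inj phiB); rewrite K2 (phi0 phiD).
  have w0' : w' != 0.
    apply: contra y0 => /eqP e; rewrite ey' e /h (phi0 phiD) G0.
    by apply/eqP; apply: (phi_inj phiB); rewrite K2 (phi0 phiD).
  have uw' : u' != w'.
    by apply: contra xy => /eqP e; rewrite ex' ey' e.
  have e1 : G alpha t.1.2 t.2 (phi u') = G alpha t0.1.2 t0.2 (phi u).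
    by rewrite -ex -[RHS](K2 (phi x)) ex' /h K2.
  have e2 : G alpha t.1.2 t.2 (phi w') = G alpha t0.1.2 t0.2 (phi w).
    by rewrite -ey -[RHS](K2 (phi y)) ey' /h K2.
  have [ei ej el] := core_uniq phiD phiB cardL prim pn ccF disjF u'F w'F u0' w0' uw'
    uF wF u0 w0 uw (ltn_ord _) (ltn_ord _) (ltn_ord _) (ltn_ord _) e1 e2.
  move: ei ej el; case: t {u'F w'F e1 e2 ex' ey'} => [[i j] l]; case: t0 {uF wF ex ey xV yV} => [[i0 j0] l0] /=.
  by move=> -> /val_inj -> /val_inj ->.
rewrite (@eq_in_count _ _ (pred1 (V t0))).
  rewrite count_uniq_mem ?undup_uniq // mem_undup.
  by apply/eqP; rewrite eqb1; apply: map_f; rewrite mem_enum inE.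
move=> W; rewrite mem_undup => /mapP[t _ ->] /=.
apply/idP/eqP=> [/uniqt -> // | ->].
by rewrite sU xV yV.
Qed.
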